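(* There exists a nontotal pca $\mathcal{A}$ (i.e. $ab$ is undefined for some $a,b\in\mathcal{A}$) in which $0$ and $1$ are not separable.
   Context: A pca is a set $\mathcal{A}$ with partial binary application containing $k,s$ with $kab=a$, $sab\downarrow$, $sabc\simeq ac(bc)$. With $i=skk$, $\mathsf{false}=ki$, $\langle a,b\rangle=\lambda^*z.zab$ ($\lambda^*$ standard combinatory abstraction), $0=\bar 0=i$, $\overline{n+1}=\langle\mathsf{false},\bar n\rangle$, $1=\bar 1$. $0,1$ are separable in $\mathcal{A}$ if there is a total $c\in\mathcal{A}$ with $ca\in\{0,1\}$ for all $a$ such that $ca=0\Rightarrow a\neq 1$ and $ca=1\Rightarrow a\neq 0$. *)

(* Defs.v *)
(** Application is partial: [app a b = None]
    means [ab] is undefined.  Terms are evaluated in [option car]; Kleene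
    equality [t ≃ u] is equality of [option car] values. *)

Definition appo {A : Type} (app : A -> A -> option A)
  (x y : option A) : option A :=
  match x, y with
  | Some a, Some b => app a b
  | _, _ => None
  end.

Record pca : Type := Pca {
  car : Type;
  app : car -> car -> option car;
  k : car;
  s : car;
  k_ax : forall a b : car,
    appo app (appo app (Some k) (Some a)) (Some b) = Some a;
  s_def : forall a b : car,
    appo app (appo app (Some s) (Some a)) (Some b) <> None;
  s_ax : forall a b c : car,
    appo app (appo app (appo app (Some s) (Some a)) (Some b)) (Some c)
    = appo app (appo app (Some a) (Some c)) (appo app (Some b) (Some c))
}.

Section Combinators.
Variable P : pca.
Local Notation "x @ y" := (appo (app P) x y) (at level 40, left associativity).

Definition comb_i : option (car P) := Some (s P) @ Some (k P) @ Some (k P).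

Definition comb_false : option (car P) := Some (k P) @ comb_i.

(** <a,b> = λ* z. z a b, computed with standard combinatory abstraction:
    λ*z.z = i, λ*z.t = k t (z not in t), λ*z.(t1 t2) = s (λ*z.t1) (λ*z.t2);
    hence <a,b> = s (s i (k a)) (k b). *)
Definition comb_pair (a b : option (car P)) : option (car P) :=
  Some (s P) @ (Some (s P) @ comb_i @ (Some (k P) @ a)) @ (Some (k P) @ b).

Definition num0 : option (car P) := comb_i.
Definition num1 : option (car P) := comb_pair comb_false num0.

End Combinators.

Definition nontotal (P : pca) : Prop :=
  exists a b : car P, app P a b = None.

Definition separable01 (P : pca) : Prop :=
  exists c : car P,
    (forall a : car P, app P c a <> None) /\
    (forall a : car P,
       (app P c a = num0 P \/ app P c a = num1 P) /\
       (app P c a = num0 P -> Some a <> num1 P) /\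
       (app P c a = num1 P -> Some a <> num0 P)).

(* Main.v *)
Require Import Defs.
From Stdlib Require Import ClassicalEpsilon Lia Arith.

Inductive tm : Type := TK | TK1 (a : tm) | TS | TS1 (a : tm) | TS2 (a b : tm) | TB (n : nat).

Fixpoint ev (n : nat) (x y : tm) : option tm :=
  match n with
  | O => None
  | S n' =>
    match x with
    | TK => Some (TK1 y)
    | TK1 a => Some a
    | TS => Some (TS1 y)
    | TS1 a => Some (TS2 a y)
    | TS2 a b =>
      match ev n' a y, ev n' b y with
      | Some u, Some v => ev n' u v
      | _, _ => None
      end
    | TB _ => None
    end
  end.

Lemma ev_mono1 : forall n x y r, ev n x y = Some r -> ev (S n) x y = Some r.
Proof.
  induction n as [|n IH]; intros x y r H; [discriminate|].
  destruct x; simpl in *; auto.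
  destruct (ev n x1 y) eqn:E1; [|discriminate].
  destruct (ev n x2 y) eqn:E2; [|discriminate].
  rewrite (IH _ _ _ E1), (IH _ _ _ E2). auto.
Qed.

Lemma ev_mono : forall n m x y r, n <= m -> ev n x y = Some r -> ev m x y = Some r.
Proof.
  intros n m x y r Hle; induction Hle; auto.
  intro H; apply ev_mono1; auto.
Qed.

Lemma ev_det : forall n m x y r r', ev n x y = Some r -> ev m x y = Some r' -> r = r'.
Proof.
  intros n m x y r r' H1 H2.
  assert (A := ev_mono n (max n m) x y r ltac:(lia) H1).
  assert (B := ev_mono m (max n m) x y r' ltac:(lia) H2).
  congruence.
Qed.

Definition tapp (x y : tm) : option tm :=
  match excluded_middle_informative (exists r, exists n, ev n x y = Some r) with
  | left H => Some (proj1_sig (constructive_indefinite_description _ H))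
  | right _ => None
  end.

Lemma tapp_spec : forall x y r, tapp x y = Some r <-> exists n, ev n x y = Some r.
Proof.
  intros x y r; unfold tapp.
  destruct excluded_middle_informative as [H|H].
  - destruct (constructive_indefinite_description _ H) as [r0 [n0 Hn0]]; simpl.
    split.
    + intro E; inversion E; subst; eauto.
    + intros [n Hn]. f_equal. eapply ev_det; eauto.
  - split; [discriminate|]. intros [n Hn]. exfalso; apply H; eauto.
Qed.

Lemma tapp_ev : forall n x y r, ev n x y = Some r -> tapp x y = Some r.
Proof. intros; apply tapp_spec; eauto. Qed.

Lemma opt_ext : forall (o1 o2 : option tm), (forall r, o1 = Some r <-> o2 = Some r) -> o1 = o2.
Proof.
  intros [a|] [b|] H; auto.
  - apply H; auto.
  - specialize (H a). destruct H as [H _]. discriminate (H eq_refl).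
  - specialize (H b). destruct H as [_ H]. discriminate (H eq_refl).
Qed.

Lemma k_ax' : forall a b, appo tapp (appo tapp (Some TK) (Some a)) (Some b) = Some a.
Proof.
  intros; simpl. rewrite (tapp_ev 1 TK a (TK1 a)) by reflexivity. simpl.
  apply (tapp_ev 1); reflexivity.
Qed.

Lemma s12 : forall a b, appo tapp (appo tapp (Some TS) (Some a)) (Some b) = Some (TS2 a b).
Proof.
  intros; simpl. rewrite (tapp_ev 1 TS a (TS1 a)) by reflexivity. simpl.
  apply (tapp_ev 1); reflexivity.
Qed.

Lemma s_def' : forall a b, appo tapp (appo tapp (Some TS) (Some a)) (Some b) <> None.
Proof. intros; rewrite s12; discriminate. Qed.

Lemma s_ax' : forall a b c,
    appo tapp (appo tapp (appo tapp (Some TS) (Some a)) (Some b)) (Some c)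
    = appo tapp (appo tapp (Some a) (Some c)) (appo tapp (Some b) (Some c)).
Proof.
  intros a b c. rewrite s12. simpl. apply opt_ext; intro r. split.
  - intro H. apply tapp_spec in H as [n Hn].
    destruct n; [discriminate|]. simpl in Hn.
    destruct (ev n a c) as [u|] eqn:E1; [|discriminate].
    destruct (ev n b c) as [v|] eqn:E2; [|discriminate].
    rewrite (tapp_ev _ _ _ _ E1), (tapp_ev _ _ _ _ E2). simpl.
    eapply tapp_ev; eauto.
  - destruct (tapp a c) as [u|] eqn:E1; [|discriminate].
    destruct (tapp b c) as [v|] eqn:E2; [|discriminate].
    simpl. intro H.
    apply tapp_spec in E1 as [n1 H1]. apply tapp_spec in E2 as [n2 H2].
    apply tapp_spec in H as [n3 H3].
    apply tapp_spec. exists (S (max n1 (max n2 n3))). simpl.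
    rewrite (ev_mono n1 (max n1 (max n2 n3)) _ _ _ ltac:(lia) H1).
    rewrite (ev_mono n2 (max n1 (max n2 n3)) _ _ _ ltac:(lia) H2).
    apply (ev_mono n3); auto; lia.
Qed.

Definition TP : pca := Pca tm tapp TK TS k_ax' s_def' s_ax'.

Fixpoint sub (m : nat) (t x : tm) : tm :=
  match x with
  | TK => TK
  | TK1 a => TK1 (sub m t a)
  | TS => TS
  | TS1 a => TS1 (sub m t a)
  | TS2 a b => TS2 (sub m t a) (sub m t b)
  | TB n => if Nat.eqb n m then t else TB n
  end.

Fixpoint mx (x : tm) : nat :=
  match x with
  | TK | TS => 0
  | TK1 a | TS1 a => mx a
  | TS2 a b => max (mx a) (mx b)
  | TB n => n
  end.

Lemma sub_fresh : forall m t x, mx x < m -> sub m t x = x.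
Proof.
  intros m t x; induction x as [|a IH| |a IH|a IHa b IHb|n]; simpl; intro H.
  all: try reflexivity.
  - rewrite IH; auto.
  - rewrite IH; auto.
  - rewrite IHa, IHb; auto; lia.
  - destruct (Nat.eqb_spec n m); auto; lia.
Qed.

Lemma ev_sub : forall m t n x y r, ev n x y = Some r -> ev n (sub m t x) (sub m t y) = Some (sub m t r).
Proof.
  intros m t n; induction n as [|n IH]; intros x y r H; [discriminate|].
  destruct x; simpl in *; try (inversion H; subst; reflexivity); try discriminate.
  - destruct (ev n x1 y) as [u|] eqn:E1; [|discriminate].
    destruct (ev n x2 y) as [v|] eqn:E2; [|discriminate].
    rewrite (IH _ _ _ E1), (IH _ _ _ E2). auto.
Qed.

Lemma tapp_sub : forall m t x y r, tapp x y = Some r -> tapp (sub m t x) (sub m t y) = Some (sub m t r).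
Proof.
  intros m t x y r H. apply tapp_spec in H as [n Hn]. eapply tapp_ev, ev_sub; eauto.
Qed.

Definition N0 := TS2 TK TK.
Definition N1 := TS2 (TS2 N0 (TK1 (TK1 N0))) (TK1 N0).

Lemma num0E : num0 TP = Some N0.
Proof.
  unfold num0, comb_i. simpl. change (appo tapp (appo tapp (Some TS) (Some TK)) (Some TK) = Some N0).
  apply s12.
Qed.

Lemma num1E : num1 TP = Some N1.
Proof.
  unfold num1, comb_pair, comb_false. fold (num0 TP). rewrite num0E.
  simpl.
  rewrite (tapp_ev 1 TK N0 (TK1 N0)) by reflexivity. simpl.
  rewrite (tapp_ev 1 TK (TK1 N0) (TK1 (TK1 N0))) by reflexivity. simpl.
  rewrite (tapp_ev 1 TS N0 (TS1 N0)) by reflexivity. simpl.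
  rewrite (tapp_ev 1 (TS1 N0) (TK1 (TK1 N0)) (TS2 N0 (TK1 (TK1 N0)))) by reflexivity. simpl.
  rewrite (tapp_ev 1 TS (TS2 N0 (TK1 (TK1 N0))) (TS1 (TS2 N0 (TK1 (TK1 N0))))) by reflexivity. simpl.
  apply (tapp_ev 1); reflexivity.
Qed.

Theorem mainTheorem13 : exists P : pca, nontotal P /\ ~ separable01 P.
Proof.
  exists TP. split.
  - exists (TB 0), (TB 0). simpl. destruct (tapp (TB 0) (TB 0)) as [r|] eqn:E; auto.
    apply tapp_spec in E as [[|n] Hn]; discriminate.
  - intros [c [Htot Hsep]]. simpl in *.
    set (m := S (mx c)).
    destruct (tapp c (TB m)) as [r|] eqn:E; [|exfalso; exact (Htot (TB m) E)].
    rewrite num0E, num1E in Hsep.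
    assert (Hc : forall t, sub m t c = c) by (intro; apply sub_fresh; unfold m; lia).
    assert (HB : forall t, sub m t (TB m) = t) by (intro; simpl; rewrite Nat.eqb_refl; auto).
    destruct (Hsep (TB m)) as [[H|H] _]; rewrite E in H; inversion H; subst.
    + pose proof (tapp_sub m N1 c (TB m) N0 E) as E'. rewrite Hc, HB in E'.
      destruct (Hsep N1) as [_ [H0 _]]. apply (H0 E'). reflexivity.
    + pose proof (tapp_sub m N0 c (TB m) N1 E) as E'. rewrite Hc, HB in E'.
      destruct (Hsep N0) as [_ [_ H0]]. apply (H0 E'). reflexivity.
Qed.
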